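(* For every instance such that $|S_2|=2$ and $\pi_1+\pi_3+\pi_4-1=0$, we have $H^{PW''}\le \tfrac{100}{53}H^*$.
   Context: An instance consists of an integer $n\ge 1$ and growth rates $1=h(1)\ge h(2)\ge\cdots\ge h(n)>0$ of bamboos $b_1,\dots,b_n$. Bamboo Garden Trimming (discrete version): - All heights are $0$ initially. - On each day $t=1,2,\dots$ every bamboo $b_j$ grows by $h(j)$. - At the end of each day the gardener cuts exactly one bamboo $\sigma(t)\in\{1,\dots,n\}$ back to height $0$. The height of a schedule $\sigma:\mathbb{N}\to\{1,\dots,n\}$ is the supremum, over all days $t$ and all $j$, of the height of $b_j$ at the end of day $t$ just before the cut. $H^*$ denotes the infimum of this height over all schedules. Value of algorithm PW'': - Split $\{1,\dots,n\}$ into four sets: - $S_1=\{j: \tfrac23<h(j)\le 1\}$; - $S_2=\{j:\tfrac12<h(j)\le\tfrac23\}$; - $S_3=\{j: h(j)\le\tfrac12 \text{ and } \tfrac23 2^{-k}<h(j)\le 2^{-k}\text{ for some integer }k\ge1\}$; - $S_4=\{j: h(j)\le\tfrac12\text{ and } 2^{-(k+1)}<h(j)\le \tfrac23 2^{-k}\text{ for some integer }k\ge 1\}$. - Modified growths: $h''(j)=2^{-k}$ for $j\in S_3$ and $h''(j)=\tfrac23 2^{-k}$ for $j\in S_4$, with $k$ as in the definition of the set. - Let $\pi_1=|S_1|$, $sh_3=\sum_{j\in S_3}h''(j)$, $sh_4=\sum_{j\in S_4}h''(j)$, $\pi_3=\lfloor sh_3\rfloor$, $\pi_4=\lfloor sh_4\rfloor$,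 $f_3=sh_3-\pi_3$, $f_4=sh_4-\pi_4$. - Option (a): $\pi_R(a)=\lceil f_3+f_4\rceil$ and $z(a)=\pi_1+|S_2|+\pi_3+\pi_4+\pi_R(a)$. - Option (b): if $S_2=\emptyset$ put $z(b)=+\infty$. Otherwise let $h^*=\max_{j\in S_2}h(j)$ and $f_2=\tfrac12$ if $|S_2|$ is odd, $f_2=0$ if $|S_2|$ is even. Then $\pi_R(b)=\lceil f_2+f_3+f_4\rceil$ and $z(b)=2h^*\,(\pi_1+\lfloor |S_2|/2\rfloor+\pi_3+\pi_4+\pi_R(b))$. - The value returned by algorithm PW'' is $H^{PW''}=\min\{z(a),z(b)\}$. The paper takes this as the maximum height of the periodic pinwheel trimming schedule that it builds from these partitions. *)

(* Defs.v *)
From Stdlib Require Import Reals Lra Lia ZArith Arith.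
Open Scope R_scope.

(* Bamboos are indexed 1..n; growth rates are h : nat -> R (values outside
   1..n are irrelevant). *)

Definition instance (n : nat) (h : nat -> R) : Prop :=
  (1 <= n)%nat /\ h 1%nat = 1 /\
  (forall j, (1 <= j)%nat -> (j < n)%nat -> h (S j) <= h j) /\
  (forall j, (1 <= j <= n)%nat -> 0 < h j).

(* A schedule: on day t (t >= 1) bamboo sigma t in {1..n} is cut. *)
Definition schedule (n : nat) (sigma : nat -> nat) : Prop :=
  forall t, (1 <= t)%nat -> (1 <= sigma t <= n)%nat.

Fixpoint height_after (h : nat -> R) (sigma : nat -> nat) (j t : nat) : R :=
  match t with
  | O => 0
  | S t' => if Nat.eq_dec (sigma (S t')) j then 0
            else height_after h sigma j t' + h j
  end.

Definition height_before (h : nat -> R) (sigma : nat -> nat) (j t : nat) : R :=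
  height_after h sigma j (Nat.pred t) + h j.

Definition heights (n : nat) (h : nat -> R) (sigma : nat -> nat) (x : R) : Prop :=
  exists t j, (1 <= t)%nat /\ (1 <= j <= n)%nat /\ x = height_before h sigma j t.

(* Schedules with unbounded heights have height +infinity
   and do not affect the infimum (round robin has finite height). *)
Definition schedule_heights (n : nat) (h : nat -> R) (r : R) : Prop :=
  exists sigma, schedule n sigma /\ is_lub (heights n h sigma) r.

Definition is_lower_bound (E : R -> Prop) (m : R) : Prop :=
  forall x, E x -> m <= x.

Definition is_glb (E : R -> Prop) (m : R) : Prop :=
  is_lower_bound E m /\ (forall b, is_lower_bound E b -> b <= m).

(* H* is the r with is_glb (schedule_heights n h) r. *)

Fixpoint sum1n (n : nat) (F : nat -> R) : R :=
  match n with
  | O => 0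
  | S m => sum1n m F + F (S m)
  end.

(* max_{j=1}^{n, P j} F j, with value 0 on an empty range *)
Fixpoint max1n (n : nat) (P : nat -> bool) (F : nat -> R) : R :=
  match n with
  | O => 0
  | S m => if P (S m) then Rmax (max1n m P F) (F (S m)) else max1n m P F
  end.

Definition floorZ (x : R) : Z := Int_part x.
Definition ceilZ (x : R) : Z := (- Int_part (- x))%Z.

(* for 0 < x <= 1/2 : the integer k >= 1 with 2^-(k+1) < x <= 2^-k,
   i.e. k = floor(log2 (1/x)) *)
Definition kidx (x : R) : nat := Z.to_nat (floorZ (- ln x / ln 2)).

Definition bR (b : bool) : R := if b then 1 else 0.
Definition Rltb (x y : R) : bool := if Rlt_dec x y then true else false.
Definition Rleb (x y : R) : bool := if Rle_dec x y then true else false.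

Definition inS1 (h : nat -> R) (j : nat) : bool := Rltb (2/3) (h j).
Definition inS2 (h : nat -> R) (j : nat) : bool :=
  Rltb (1/2) (h j) && Rleb (h j) (2/3).
Definition inS3 (h : nat -> R) (j : nat) : bool :=
  Rleb (h j) (1/2) && Rltb (2/3 * (/2) ^ kidx (h j)) (h j).
Definition inS4 (h : nat -> R) (j : nat) : bool :=
  Rleb (h j) (1/2) && Rleb (h j) (2/3 * (/2) ^ kidx (h j)).

Definition hmod3 (h : nat -> R) (j : nat) : R := (/2) ^ kidx (h j).
Definition hmod4 (h : nat -> R) (j : nat) : R := 2/3 * (/2) ^ kidx (h j).

Definition pi1 (n : nat) (h : nat -> R) : R := sum1n n (fun j => bR (inS1 h j)).
Definition card2 (n : nat) (h : nat -> R) : nat :=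
  List.length (List.filter (inS2 h) (List.seq 1 n)).
Definition sh3 (n : nat) (h : nat -> R) : R :=
  sum1n n (fun j => if inS3 h j then hmod3 h j else 0).
Definition sh4 (n : nat) (h : nat -> R) : R :=
  sum1n n (fun j => if inS4 h j then hmod4 h j else 0).
Definition pi3 (n : nat) (h : nat -> R) : R := IZR (floorZ (sh3 n h)).
Definition pi4 (n : nat) (h : nat -> R) : R := IZR (floorZ (sh4 n h)).
Definition f3 (n : nat) (h : nat -> R) : R := sh3 n h - pi3 n h.
Definition f4 (n : nat) (h : nat -> R) : R := sh4 n h - pi4 n h.

Definition z_a (n : nat) (h : nat -> R) : R :=
  pi1 n h + INR (card2 n h) + pi3 n h + pi4 n h
  + IZR (ceilZ (f3 n h + f4 n h)).

Definition hstar (n : nat) (h : nat -> R) : R := max1n n (inS2 h) h.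
Definition f2 (n : nat) (h : nat -> R) : R :=
  if Nat.odd (card2 n h) then 1/2 else 0.

(* option (b), only meaningful when S_2 is nonempty *)
Definition z_b (n : nat) (h : nat -> R) : R :=
  2 * hstar n h *
  (pi1 n h + INR (Nat.div2 (card2 n h)) + pi3 n h + pi4 n h
   + IZR (ceilZ (f2 n h + f3 n h + f4 n h))).

Definition H_PW (n : nat) (h : nat -> R) : R :=
  if Nat.eqb (card2 n h) 0 then z_a n h else Rmin (z_a n h) (z_b n h).

(* Main.v *)
Require Import Defs.
From Stdlib Require Import Reals Lra Lia ZArith Arith List.
Open Scope R_scope.

Lemma sum1n_le n F G : (forall j, (1<=j<=n)%nat -> F j <= G j) -> sum1n n F <= sum1n n G.
Proof. induction n; intros H; simpl. lra.
  assert (sum1n n F <= sum1n n G) by (apply IHn; intros; apply H; lia).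
  assert (F (S n) <= G (S n)) by (apply H; lia). lra. Qed.

Lemma sum1n_plus n F G : sum1n n (fun j => F j + G j) = sum1n n F + sum1n n G.
Proof. induction n; simpl. lra. rewrite IHn. lra. Qed.

Lemma sum1n_minus n F G : sum1n n (fun j => F j - G j) = sum1n n F - sum1n n G.
Proof. induction n; simpl. lra. rewrite IHn. lra. Qed.

Lemma sum1n_scal n c F : sum1n n (fun j => c * F j) = c * sum1n n F.
Proof. induction n; simpl. lra. rewrite IHn. lra. Qed.

Lemma sum1n_const_le n c F : (forall j, (1<=j<=n)%nat -> F j <= c) -> sum1n n F <= INR n * c.
Proof. induction n; intros H. simpl; lra. cbn [sum1n]; rewrite S_INR.
  assert (sum1n n F <= INR n * c) by (apply IHn; intros; apply H; lia).
  assert (F (S n) <= c) by (apply H; lia). lra. Qed.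

Lemma sum1n_nonneg n F : (forall j, (1<=j<=n)%nat -> 0 <= F j) -> 0 <= sum1n n F.
Proof. intros H. replace 0 with (sum1n n (fun _ => 0)). apply sum1n_le; auto.
  induction n; simpl; auto. rewrite IHn. lra. intros; apply H; lia. Qed.

Lemma sum1n_ge1 n F : (1 <= n)%nat -> (forall j, (1<=j<=n)%nat -> 0 <= F j) -> F 1%nat <= sum1n n F.
Proof. induction n; intros Hn H. lia. simpl. destruct n. simpl. lra.
  assert (F 1%nat <= sum1n (S n) F) by (apply IHn; [lia| intros; apply H; lia]).
  assert (0 <= F (S (S n))) by (apply H; lia). lra. Qed.

Lemma sum1n_ind n k X : (1 <= k)%nat ->
  sum1n n (fun j => if Nat.eq_dec j k then X else 0) = if Nat.leb k n then X else 0.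
Proof. intros Hk. induction n; cbn [sum1n].
  destruct (Nat.leb k 0) eqn:E; auto. apply Nat.leb_le in E; lia.
  rewrite IHn. destruct (Nat.eq_dec (S n) k).
  - subst. destruct (Nat.leb (S n) n) eqn:E. apply Nat.leb_le in E; lia.
    rewrite Nat.leb_refl. lra.
  - destruct (Nat.leb k n) eqn:E; destruct (Nat.leb k (S n)) eqn:E2;
    try apply Nat.leb_le in E; try apply Nat.leb_le in E2;
    try apply Nat.leb_gt in E; try apply Nat.leb_gt in E2; try lra; lia. Qed.

Lemma ha_nonneg h sigma j t : 0 <= h j -> 0 <= height_after h sigma j t.
Proof. intros H; induction t; simpl. lra. destruct (Nat.eq_dec (sigma (S t)) j); lra. Qed.

Fixpoint cntD (sigma : nat -> nat) (T : nat) : R :=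
  match T with O => 0 | S t => cntD sigma t + (if Nat.eq_dec (sigma (S t)) 1%nat then 0 else 1) end.

Definition gS (n : nat) (h : nat -> R) : R := sum1n n (fun j => if Nat.eqb j 1 then 0 else h j).

Lemma lower_bound n h sigma r : instance n h -> schedule n sigma ->
  is_upper_bound (heights n h sigma) r -> r < 3 -> 2 * gS n h <= r.
Proof.
  intros [Hn [H1 [Hdec Hpos]]] Hsch Hub Hr3.
  assert (Hb : forall u j, (1<=j<=n)%nat -> height_after h sigma j u + h j <= r).
  { intros u j Hj. apply Hub. exists (S u), j. split. lia. split. auto. reflexivity. }
  assert (Hr0 : 1 <= r). { pose proof (Hb O 1%nat ltac:(lia)). simpl in H. lra. }
  assert (Ha : forall u, (1<=u)%nat -> sigma u = 1%nat \/ sigma (S u) = 1%nat).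
  { intros u Hu. destruct (Nat.eq_dec (sigma u) 1%nat); auto.
    destruct (Nat.eq_dec (sigma (S u)) 1%nat); auto. exfalso.
    pose proof (Hb (S u) 1%nat ltac:(lia)) as HH.
    destruct u as [|u]. lia.
    cbn [height_after] in HH.
    destruct (Nat.eq_dec (sigma (S (S u))) 1%nat); try contradiction.
    destruct (Nat.eq_dec (sigma (S u)) 1%nat); try contradiction.
    pose proof (ha_nonneg h sigma 1%nat u ltac:(lra)). lra. }
  assert (HD : forall m, cntD sigma (2*m) <= INR m).
  { induction m. simpl. lra.
    replace (2 * S m)%nat with (S (S (2*m))) by lia. cbn [cntD]. rewrite S_INR.
    destruct (Ha (S (2*m)) ltac:(lia)) as [E|E]; rewrite E;
    repeat match goal with |- context [Nat.eq_dec ?a ?b] => destruct (Nat.eq_dec a b) end;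
    try lra; congruence. }
  set (G := fun T => sum1n n (fun j => if Nat.eqb j 1 then 0 else height_after h sigma j T)).
  assert (HI : forall T, gS n h * INR T <= r * cntD sigma T + G T).
  { induction T. simpl. unfold G. simpl.
    assert (sum1n n (fun j => if Nat.eqb j 1 then 0 else 0) = 0) by
      (clear; induction n; cbn [sum1n]; [lra| destruct (Nat.eqb (S n) 1); lra]). lra.
    set (k := sigma (S T)).
    assert (Hk : (1 <= k <= n)%nat) by (apply Hsch; lia).
    assert (HG : G (S T) >= G T + gS n h - (if Nat.eq_dec k 1 then 0 else r)).
    { assert (Hp : sum1n n (fun j => (if Nat.eqb j 1 then 0 else height_after h sigma j T)
          + (if Nat.eqb j 1 then 0 else h j)
          - (if Nat.eq_dec j k then (if Nat.eq_dec k 1 then 0 else r) else 0)) <= G (S T)).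
      { unfold G. apply sum1n_le. intros j Hj. cbn [height_after]. fold k.
        destruct (Nat.eq_dec j k) as [ej|ej].
        - subst j. destruct (Nat.eq_dec k k); try contradiction.
          destruct (Nat.eq_dec k 1) as [e1|e1].
          + rewrite e1. simpl. lra.
          + destruct (Nat.eqb k 1) eqn:Eb. apply Nat.eqb_eq in Eb; contradiction.
            pose proof (Hb T k Hj). lra.
        - destruct (Nat.eq_dec k j); try (subst; contradiction).
          destruct (Nat.eqb j 1); lra. }
      rewrite sum1n_minus, sum1n_plus, sum1n_ind in Hp by lia.
      destruct (Nat.leb k n) eqn:E. 2:{ apply Nat.leb_gt in E; lia. }
      unfold gS. fold (G T) in Hp. unfold G in Hp |- *. lra. }
    rewrite S_INR. cbn [cntD]. fold k.
    destruct (Nat.eq_dec k 1); lra. }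
  assert (HGb : forall T, G T <= INR n * r).
  { intros T. apply sum1n_const_le. intros j Hj. destruct (Nat.eqb j 1). lra.
    pose proof (Hb T j Hj). pose proof (Hpos j Hj). lra. }
  destruct (Rle_or_lt (2 * gS n h) r) as [Hle|Hlt]; auto. exfalso.
  destruct (INR_archimed (2 * gS n h - r) (INR n * r) ltac:(lra)) as [m Hm].
  pose proof (HI (2*m)%nat) as H2. pose proof (HD m). pose proof (HGb (2*m)%nat).
  rewrite mult_INR in H2. simpl (INR 2) in H2.
  assert (r * cntD sigma (2*m) <= r * INR m) by (apply Rmult_le_compat_l; lra).
  nra.
Qed.

Lemma inS2_P h j : inS2 h j = true -> 1/2 < h j /\ h j <= 2/3.
Proof. unfold inS2, Rltb, Rleb. destruct (Rlt_dec _ _); destruct (Rle_dec _ _); simpl; intros; try discriminate; lra. Qed.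

Lemma card2_S n h : card2 (S n) h = (card2 n h + if inS2 h (S n) then 1 else 0)%nat.
Proof. unfold card2. rewrite seq_S, filter_app, length_app. simpl.
  destruct (inS2 h (S n)); simpl; lia. Qed.

Definition sum2 n h := sum1n n (fun j => if inS2 h j then h j else 0).

Lemma sum2_half n h : (1/2) * INR (card2 n h) <= sum2 n h.
Proof. induction n. unfold card2, sum2; simpl. lra.
  rewrite card2_S. unfold sum2 in *; cbn [sum1n]. destruct (inS2 h (S n)) eqn:E.
  - apply inS2_P in E. rewrite plus_INR. simpl (INR 1). lra.
  - rewrite Nat.add_0_r. lra. Qed.

Lemma sum2_max n h : hstar n h + (1/2) * INR (card2 n h) - 1/2 <= sum2 n h.
Proof. induction n. unfold card2, sum2, hstar; simpl. lra.
  pose proof (sum2_half n h).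
  rewrite card2_S. unfold sum2, hstar in *; cbn [sum1n max1n]. destruct (inS2 h (S n)) eqn:E.
  - apply inS2_P in E. rewrite plus_INR. simpl (INR 1).
    unfold Rmax. destruct (Rle_dec _ _); lra.
  - rewrite Nat.add_0_r. lra. Qed.

Lemma hstar_le n h : hstar n h <= 2/3.
Proof. unfold hstar. induction n; cbn [max1n]. lra.
  destruct (inS2 h (S n)) eqn:E; auto. apply inS2_P in E.
  unfold Rmax. destruct (Rle_dec _ _); lra. Qed.

Lemma kidx_P x : 0 < x -> x <= 1/2 -> (/2) ^ (S (kidx x)) < x.
Proof. intros H0 H1.
  assert (Hl2 : 0 < ln 2) by (pose proof ln_lt_2; lra).
  assert (Hlx : ln x <= - ln 2).
  { rewrite <- ln_Rinv by lra. destruct (Req_dec x (/2)). subst; lra.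
    left. apply ln_increasing; lra. }
  set (y := - ln x / ln 2).
  assert (Hy : 1 <= y). { unfold y. apply (Rmult_le_reg_r (ln 2)); auto. field_simplify; lra. }
  assert (Hyl : y * ln 2 = - ln x) by (unfold y; field; lra).
  unfold kidx, floorZ. fold y.
  destruct (base_Int_part y) as [Ha Hb].
  set (m := Int_part y) in *.
  assert (Hm : (0 <= m)%Z). { apply le_IZR. lra. }
  apply ln_lt_inv; auto. apply pow_lt; lra.
  rewrite ln_pow by lra. rewrite ln_Rinv by lra. rewrite S_INR.
  rewrite INR_IZR_INZ, Z2Nat.id by auto.
  nra. Qed.

Lemma Int_part_nonneg x : 0 <= x -> 0 <= IZR (Int_part x).
Proof. intros H. destruct (base_Int_part x). apply IZR_le.
  assert (-1 < Int_part x)%Z by (apply lt_IZR; lra). lia. Qed.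

Lemma gS_ge n h : instance n h -> sum2 n h + (2/3)*sh3 n h + (3/4)*sh4 n h <= gS n h.
Proof. intros [Hn [H1 [Hdec Hpos]]].
  unfold sum2, sh3, sh4, gS. rewrite <- !sum1n_scal, <- !sum1n_plus.
  apply sum1n_le. intros j Hj. pose proof (Hpos j Hj) as Hp.
  destruct (Nat.eqb j 1) eqn:Ej.
  - apply Nat.eqb_eq in Ej; subst j. rewrite H1.
    unfold inS2, inS3, inS4, Rltb, Rleb.
    repeat (destruct (Rlt_dec _ _)); repeat (destruct (Rle_dec _ _)); simpl; lra.
  - unfold inS2, inS3, inS4, hmod3, hmod4, Rltb, Rleb.
    set (p := (/2) ^ kidx (h j)).
    assert (Hp0 : 0 < p) by (apply pow_lt; lra).
    destruct (Rle_dec (h j) (1/2)) as [Hh|Hh].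
    + pose proof (kidx_P (h j) Hp Hh) as HK. simpl in HK. fold p in HK.
      repeat (destruct (Rlt_dec _ _)); repeat (destruct (Rle_dec _ _)); simpl; lra.
    + repeat (destruct (Rlt_dec _ _)); repeat (destruct (Rle_dec _ _)); simpl; lra.
Qed.

Theorem proposition6 (n : nat) (h : nat -> R) :
  instance n h ->
  card2 n h = 2%nat ->
  pi1 n h + pi3 n h + pi4 n h - 1 = 0 ->
  forall Hstar : R, is_glb (schedule_heights n h) Hstar ->
  H_PW n h <= 100 / 53 * Hstar.
Proof.
  intros Hinst Hc Hpi Hs [_ Hglb].
  pose proof Hinst as [Hn [H1 [Hdec Hpos]]].
  set (L := Rmin 3 (2 * gS n h)).
  assert (HL : L <= Hs).
  { apply Hglb. intros x [sigma [Hsch [Hub _]]]. unfold L.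
    destruct (Rlt_or_le x 3).
    - pose proof (lower_bound n h sigma x Hinst Hsch Hub H). pose proof (Rmin_r 3 (2 * gS n h)). lra.
    - pose proof (Rmin_l 3 (2 * gS n h)). lra. }
  assert (Hp1 : 1 <= pi1 n h).
  { unfold pi1. replace 1 with (bR (inS1 h 1%nat)).
    apply (sum1n_ge1 n (fun j => bR (inS1 h j))); auto. intros; unfold bR; destruct (inS1 h j); lra.
    unfold inS1, Rltb, bR. rewrite H1. destruct (Rlt_dec _ _); lra. }
  assert (Hs3 : 0 <= sh3 n h).
  { unfold sh3. apply sum1n_nonneg. intros. unfold hmod3. destruct (inS3 h j). left; apply pow_lt; lra. lra. }
  assert (Hs4 : 0 <= sh4 n h).
  { unfold sh4. apply sum1n_nonneg. intros. unfold hmod4. destruct (inS4 h j).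
    assert (0 < (/2) ^ kidx (h j)) by (apply pow_lt; lra). lra. lra. }
  pose proof (Int_part_nonneg _ Hs3) as Hp3. pose proof (Int_part_nonneg _ Hs4) as Hp4.
  fold (floorZ (sh3 n h)) in Hp3. fold (floorZ (sh4 n h)) in Hp4.
  fold (pi3 n h) in Hp3. fold (pi4 n h) in Hp4.
  assert (E1 : pi1 n h = 1) by lra. assert (E3 : pi3 n h = 0) by lra. assert (E4 : pi4 n h = 0) by lra.
  assert (Hs3' : sh3 n h < 1).
  { destruct (base_Int_part (sh3 n h)). unfold pi3, floorZ in E3. lra. }
  assert (Hs4' : sh4 n h < 1).
  { destruct (base_Int_part (sh4 n h)). unfold pi4, floorZ in E4. lra. }
  assert (F3 : f3 n h = sh3 n h) by (unfold f3; lra).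
  assert (F4 : f4 n h = sh4 n h) by (unfold f4; lra).
  assert (F2 : f2 n h = 0) by (unfold f2; rewrite Hc; reflexivity).
  set (x := f3 n h + f4 n h).
  set (z := ceilZ x).
  assert (Hz : x <= IZR z < x + 1).
  { unfold z, ceilZ. rewrite opp_IZR. destruct (base_Int_part (- x)). lra. }
  assert (Hx : 0 <= x < 2) by (unfold x; lra).
  assert (Hzr : (0 <= z <= 2)%Z).
  { split. apply le_IZR; lra. assert (z < 3)%Z by (apply lt_IZR; lra). lia. }
  assert (HPW : H_PW n h = Rmin (3 + IZR z) (2 * hstar n h * (2 + IZR z))).
  { unfold H_PW. rewrite Hc. simpl Nat.eqb. cbv iota. unfold z_a, z_b.
    rewrite F2, Rplus_0_l, Hc, E1, E3, E4. simpl (INR 2). simpl (INR (Nat.div2 2)).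
    fold x z. f_equal; lra. }
  pose proof (gS_ge n h Hinst) as HgS.
  pose proof (sum2_max n h) as Hm. pose proof (sum2_half n h) as Hh.
  rewrite Hc in Hm, Hh. simpl (INR 2) in Hm, Hh.
  pose proof (hstar_le n h) as Ha.
  assert (HPL : H_PW n h <= 100/53 * L).
  { rewrite HPW. assert (Hxs : x = sh3 n h + sh4 n h) by (unfold x; lra).
    pose proof (Rmin_l (3 + IZR z) (2 * hstar n h * (2 + IZR z))).
    pose proof (Rmin_r (3 + IZR z) (2 * hstar n h * (2 + IZR z))).
    set (A := Rmin (3 + IZR z) (2 * hstar n h * (2 + IZR z))) in *.
    unfold L. destruct (Rle_dec 3 (2 * gS n h)).
    - rewrite Rmin_left by lra.
      assert (IZR z <= 2) by (apply IZR_le; lia). lra.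
    - rewrite Rmin_right by lra.
      assert (z = 0 \/ z = 1 \/ z = 2)%Z as [Z|[Z|Z]] by lia; rewrite Z in *; simpl IZR in *; lra. }
  lra.
Qed.
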